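(* Let $S$ be a monoid and $A_S$ an artinian projective right $S$-act, and let $T=\mathrm{End}(A_S)$ (a monoid under composition). Then $T$ satisfies the descending chain condition on principal right ideals $fT$, $f\in T$.
   Context: $A_S$ is artinian if its congruences satisfy the descending chain condition. $A_S$ is projective if for every surjective homomorphism $g:B\to C$ and every homomorphism $h:A\to C$ there is $k:A\to B$ with $gk=h$. In $T$, the product $fg$ denotes the composition $f\circ g$, and $fT=\{f\circ g: g\in T\}$. *)

(* Defs.v *)
From Stdlib Require Import Arith.

Record Monoid := {
  mcar :> Type;
  mmul : mcar -> mcar -> mcar;
  mone : mcar;
  mmulA : forall x y z, mmul x (mmul y z) = mmul (mmul x y) z;
  mmul1l : forall x, mmul mone x = x;
  mmul1r : forall x, mmul x mone = x
}.

Record RAct (S : Monoid) := {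
  acar :> Type;
  aact : acar -> S -> acar;
  aact1 : forall a, aact a (mone S) = a;
  aactM : forall a s t, aact (aact a s) t = aact a (mmul S s t)
}.
Arguments aact {S} _ _ _.

Definition is_hom {S : Monoid} (B C : RAct S) (f : B -> C) : Prop :=
  forall (b : B) (s : S), f (aact B b s) = aact C (f b) s.

Definition is_congruence {S : Monoid} (A : RAct S) (r : A -> A -> Prop) : Prop :=
  (forall a, r a a) /\ (forall a b, r a b -> r b a) /\
  (forall a b c, r a b -> r b c -> r a c) /\
  (forall a b (s : S), r a b -> r (aact A a s) (aact A b s)).

Definition artinian {S : Monoid} (A : RAct S) : Prop :=
  forall rho : nat -> A -> A -> Prop,
    (forall n, is_congruence A (rho n)) ->
    (forall n a b, rho (Nat.succ n) a b -> rho n a b) ->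
    exists N, forall n, N <= n -> forall a b, rho n a b <-> rho N a b.

Definition projective {S : Monoid} (A : RAct S) : Prop :=
  forall (B C : RAct S) (g : B -> C) (h : A -> C),
    is_hom B C g -> (forall c : C, exists b : B, g b = c) ->
    is_hom A C h ->
    exists k : A -> B, is_hom A B k /\ forall a : A, g (k a) = h a.

(* T = End(A_S), a monoid under composition; endomorphisms identified
   extensionally *)
Record Endo {S : Monoid} (A : RAct S) := {
  emap :> A -> A;
  ehom : is_hom A A emap
}.

Definition in_principal_right_ideal {S : Monoid} {A : RAct S}
  (f h : Endo A) : Prop :=
  exists g : Endo A, forall a : A, h a = f (g a).

Definition pri_sub {S : Monoid} {A : RAct S} (f' f : Endo A) : Prop :=
  forall h : Endo A, in_principal_right_ideal f' h -> in_principal_right_ideal f h.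

Definition dcc_principal_right_ideals {S : Monoid} (A : RAct S) : Prop :=
  forall f : nat -> Endo A,
    (forall n, pri_sub (f (Nat.succ n)) (f n)) ->
    exists N, forall n, N <= n -> pri_sub (f N) (f n) /\ pri_sub (f n) (f N).

(* Main.v *)
Require Import Defs.
From Stdlib Require Import Arith ProofIrrelevance.

Section Aux.
Context {S : Monoid} (A : RAct S).

Definition Im (f : A -> A) (x : A) : Prop := exists a, f a = x.

Lemma im_act (f : Endo A) x s : Im f x -> Im f (aact A x s).
Proof. intros [a Ha]. exists (aact A a s). rewrite (ehom A f). now subst. Qed.

Definition subact_car (f : Endo A) := {x : A | Im f x}.
Definition subact_act (f : Endo A) (x : subact_car f) (s : S) : subact_car f :=
  exist _ (aact A (proj1_sig x) s) (im_act f _ s (proj2_sig x)).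

Lemma subact_act1 (f : Endo A) x : subact_act f x (mone S) = x.
Proof. destruct x as [x p]. unfold subact_act. simpl.
  apply eq_sig_hprop. intros; apply proof_irrelevance. simpl. apply aact1. Qed.
Lemma subact_actM (f : Endo A) x s t :
  subact_act f (subact_act f x s) t = subact_act f x (mmul S s t).
Proof. destruct x as [x p]. unfold subact_act. simpl.
  apply eq_sig_hprop. intros; apply proof_irrelevance. simpl. apply aactM. Qed.

Definition Sub (f : Endo A) : RAct S :=
  {| acar := subact_car f; aact := subact_act f;
     aact1 := subact_act1 f; aactM := subact_actM f |}.

Definition idE : Endo A := {| emap := fun a => a; ehom := fun b s => eq_refl |}.
Lemma comp_hom (f g : Endo A) : is_hom A A (fun a => f (g a)).
Proof. intros b s. rewrite (ehom A g), (ehom A f). reflexivity. Qed.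
Definition compE (f g : Endo A) : Endo A := {| emap := _; ehom := comp_hom f g |}.

Lemma pri_trans (f g h : Endo A) : pri_sub f g -> pri_sub g h -> pri_sub f h.
Proof. intros H1 H2 k Hk. apply H2, H1, Hk. Qed.

Definition rees (f : Endo A) (a b : A) : Prop := a = b \/ (Im f a /\ Im f b).

Lemma rees_cong (f : Endo A) : is_congruence A (rees f).
Proof.
  unfold rees; repeat split.
  - auto.
  - intros a b [H|[H1 H2]]; [left; auto|right; auto].
  - intros a b c [H|[H1 H2]] [H'|[H1' H2']]; subst; auto.
  - intros a b s [H|[H1 H2]]; [left; subst; auto|right; split; apply im_act; auto].
Qed.
End Aux.

Theorem mainTheorem19 (S : Monoid) (A : RAct S) :
  artinian A -> projective A -> dcc_principal_right_ideals A.
Proof.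
  intros Hart Hproj f Hch.
  assert (Hsub : forall n x, Im A (f (Nat.succ n)) x -> Im A (f n) x).
  { intros n x [a Ha]. destruct (Hch n (f (Nat.succ n))) as [g Hg].
    - exists (idE A). intros; reflexivity.
    - exists (g a). rewrite <- Hg. exact Ha. }
  destruct (Hart (fun n => rees A (f n))) as [N HN].
  - intros n; apply rees_cong.
  - intros n a b [H|[H1 H2]]; [left; auto|right; split; apply Hsub; auto].
  - exists N. intros n Hn.
    assert (Hback : pri_sub (f n) (f N)).
    { induction Hn. - intros h Hh; exact Hh.
      - eapply pri_trans; [apply Hch|exact IHHn]. }
    split; [|exact Hback].
    assert (Himg : forall a, Im A (f n) (f N a)).
    { intros a. set (x := f N a). set (y := f n x).
      assert (Hr : rees A (f N) x y).
      { right. split. - exists a; reflexivity.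
        - destruct (Hback (f n)) as [g Hg]. { exists (idE A); reflexivity. }
          exists (g x). unfold y. rewrite Hg. reflexivity. }
      apply (HN n Hn) in Hr. destruct Hr as [H|[H1 H2]].
      - exists x. unfold y in H. symmetry; exact H.
      - exact H1. }
    set (C := Sub A (f n)).
    set (gg := fun a : A => (exist _ (f n a) (ex_intro _ a eq_refl) : C)).
    set (hh := fun a : A => (exist _ (f N a) (Himg a) : C)).
    destruct (Hproj A C gg hh) as [k [Hk Hkg]].
    + intros b s. apply eq_sig_hprop; [intros; apply proof_irrelevance|].
      simpl. apply (ehom A (f n)).
    + intros [c [a Ha]]. exists a. apply eq_sig_hprop; [intros; apply proof_irrelevance|].
      simpl. exact Ha.
    + intros b s. apply eq_sig_hprop; [intros; apply proof_irrelevance|].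
      simpl. apply (ehom A (f N)).
    + set (kE := {| emap := k; ehom := Hk |} : Endo A).
      intros h [g Hg]. exists (compE A kE g). intros a. rewrite Hg. simpl.
      pose proof (f_equal (@proj1_sig _ _) (Hkg (g a))) as E. simpl in E.
      symmetry; exact E.
Qed.
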